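(* Let $\mathcal{L}=(\mathrm{Fm},\vdash)$ be a selfextensional logic, $N\subseteq\mathrm{Fm}\times\mathrm{Fm}$ a normative system, $P\subseteq P_N$ a conditional permission system, and $(\mathrm{X})\in\{(\top),(\mathrm{SI}),(\mathrm{WO})\}$. Then: 1. $S^{(\mathrm{AND})}(P,N)$ is closed under $(\mathrm{AND})^{\downarrow}$. 2. $S^{(\mathrm{OR})}(P,N)$ is closed under $(\mathrm{OR})^{\downarrow}$. 3. If $N^{(\mathrm{CT})}$ and $N^{(\mathrm{CT})}_{(\beta,\gamma)}$ are closed under (AND) for every $(\beta,\gamma)\in P$, then $S^{(\mathrm{CT})}(P,N)$ is closed under $(\mathrm{CT})^{\downarrow}$. 4. $S^{(\mathrm{X})}(P,N)$ is closed under (X). 5. For $1\le i\le4$, if $S^i(P,N)$ is closed under (SI) and $(\mathrm{CT})^{\downarrow}$, then $S^i(P,N)$ is closed under $(\mathrm{AND})^{\downarrow}$.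
   Context: $Cn(\Gamma)=\{\psi\mid\Gamma\vdash\psi\}$, $Cn(\varphi,\psi)=Cn(\{\varphi,\psi\})$. Standing convention: rules mentioning $\wedge,\vee,\top$ are considered only for logics having a term $\wedge$ with $Cn(\varphi\wedge\psi)=Cn(\{\varphi,\psi\})$, a term $\vee$ with $Cn(\varphi\vee\psi)=Cn(\varphi)\cap Cn(\psi)$, a constant $\top$ with $\top\in Cn(\varphi)$ for all $\varphi$, respectively. Rules on a relation $R\subseteq\mathrm{Fm}\times\mathrm{Fm}$: $(\top)$: $(\top,\top)\in R$; (SI): $(\alpha,\varphi)\in R,\beta\vdash\alpha\Rightarrow(\beta,\varphi)\in R$; (WO): $(\alpha,\varphi)\in R,\varphi\vdash\psi\Rightarrow(\alpha,\psi)\in R$; (AND): $(\alpha,\varphi),(\alpha,\psi)\in R\Rightarrow(\alpha,\varphi\wedge\psi)\in R$; (OR): $(\alpha,\varphi),(\beta,\varphi)\in R\Rightarrow(\alpha\vee\beta,\varphi)\in R$; (CT): $(\alpha,\varphi),(\alpha\wedge\varphi,\psi)\in R\Rightarrow(\alpha,\psi)\in R$. Rules relating $R$ to $N$: $(\mathrm{AND})^{\downarrow}$: $(\alpha,\varphi)\in N,(\alpha,\psi)\in R\Rightarrow(\alpha,\varphi\wedge\psi)\in R$; $(\mathrm{OR})^{\downarrow}$: $(\alpha,\varphi)\in N,(\beta,\varphi)\in R\Rightarrow(\alpha\vee\beta,\varphi)\in R$; $(\mathrm{CT})^{\downarrow}$: $(\alpha,\varphi)\in N,(\alpha\wedge\varphi,\psi)\in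 R\Rightarrow(\alpha,\varphi\wedge\psi)\in R$. $N^{(\mathrm{R})}$ is the smallest extension of $N$ closed under the single rule (R); $N^{(\mathrm{R})}_{(\alpha,\varphi)}$ the smallest extension of $N\cup\{(\alpha,\varphi)\}$ closed under (R); $N^i$, $N^i_{(\alpha,\varphi)}$ the same for the rule sets $i=1$: $(\top)$,(SI),(WO),(AND); $i=2$: plus (OR); $i=3$: $(\top)$,(SI),(WO),(AND),(CT); $i=4$: all six. $S^{(\mathrm{R})}(P,N)=\bigcup\{N^{(\mathrm{R})}_{(\alpha,\varphi)}\mid(\alpha,\varphi)\in P\}$ if $P\neq\varnothing$, and $N^{(\mathrm{R})}$ if $P=\varnothing$; $S^i(P,N)$ analogously with $N^i$. $P_N=\{(\alpha,\varphi)\mid\forall\psi((\alpha,\psi)\in N\Rightarrow Cn(\varphi,\psi)\neq\mathrm{Fm})\}$. *)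

(* Defs.v *)
From Stdlib Require Import Fin.

Set Implicit Arguments.

Record signature := { sym : Type; arity : sym -> nat }.

Inductive Fm (Sg : signature) : Type :=
| Var : nat -> Fm Sg
| App : forall f : sym Sg, (Fin.t (arity Sg f) -> Fm Sg) -> Fm Sg.

Arguments Var {Sg} _.
Arguments App {Sg} f _.

Fixpoint subst {Sg : signature} (s : nat -> Fm Sg) (t : Fm Sg) : Fm Sg :=
  match t with
  | Var n => s n
  | App f a => App f (fun i => subst s (a i))
  end.

Fixpoint closed {Sg : signature} (t : Fm Sg) : Prop :=
  match t with
  | Var _ => False
  | App f a => forall i, closed (a i)
  end.

(* the binary term operation induced by a formula d(x0, x1):
   x0 |-> phi, every other variable |-> psi *)
Definition bin {Sg : signature} (d : Fm Sg) (phi psi : Fm Sg) : Fm Sg :=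
  subst (fun n => match n with O => phi | S _ => psi end) d.

Definition sing {Sg : signature} (a : Fm Sg) : Fm Sg -> Prop := fun x => x = a.
Definition pair2 {Sg : signature} (a b : Fm Sg) : Fm Sg -> Prop :=
  fun x => x = a \/ x = b.

Record logic (Sg : signature) := {
  vdash : (Fm Sg -> Prop) -> Fm Sg -> Prop;
  vdash_refl : forall (G : Fm Sg -> Prop) phi, G phi -> vdash G phi;
  vdash_mono : forall (G D : Fm Sg -> Prop) phi,
      (forall x, G x -> D x) -> vdash G phi -> vdash D phi;
  vdash_cut : forall (G D : Fm Sg -> Prop) phi,
      (forall x, D x -> vdash G x) -> vdash D phi -> vdash G phi;
  vdash_struct : forall (s : nat -> Fm Sg) (G : Fm Sg -> Prop) phi,
      vdash G phi ->
      vdash (fun x => exists y, G y /\ x = subst s y) (subst s phi)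
}.

Arguments vdash {Sg} l _ _.

Section Defs.
Variables (Sg : signature) (L : logic Sg).
Notation F := (Fm Sg).
Notation rel := (F -> F -> Prop).

Definition interderivable (a b : F) : Prop :=
  vdash L (sing a) b /\ vdash L (sing b) a.
Definition selfextensional : Prop :=
  forall (f : sym Sg) (a b : Fin.t (arity Sg f) -> F),
    (forall i, interderivable (a i) (b i)) -> interderivable (App f a) (App f b).

Definition is_conj (d : F) : Prop :=
  forall phi psi chi, vdash L (sing (bin d phi psi)) chi <-> vdash L (pair2 phi psi) chi.
Definition is_disj (d : F) : Prop :=
  forall phi psi chi, vdash L (sing (bin d phi psi)) chi <->
                      (vdash L (sing phi) chi /\ vdash L (sing psi) chi).
Definition is_top (t : F) : Prop := closed t /\ forall phi, vdash L (sing phi) t.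

Definition r_top (t : F) (R : rel) : Prop := R t t.
Definition r_SI (R : rel) : Prop :=
  forall al be phi, R al phi -> vdash L (sing be) al -> R be phi.
Definition r_WO (R : rel) : Prop :=
  forall al phi psi, R al phi -> vdash L (sing phi) psi -> R al psi.
Definition r_AND (c : F) (R : rel) : Prop :=
  forall al phi psi, R al phi -> R al psi -> R al (bin c phi psi).
Definition r_OR (d : F) (R : rel) : Prop :=
  forall al be phi, R al phi -> R be phi -> R (bin d al be) phi.
Definition r_CT (c : F) (R : rel) : Prop :=
  forall al phi psi, R al phi -> R (bin c al phi) psi -> R al psi.

Definition r_AND_down (c : F) (N R : rel) : Prop :=
  forall al phi psi, N al phi -> R al psi -> R al (bin c phi psi).
Definition r_OR_down (d : F) (N R : rel) : Prop :=
  forall al be phi, N al phi -> R be phi -> R (bin d al be) phi.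
Definition r_CT_down (c : F) (N R : rel) : Prop :=
  forall al phi psi, N al phi -> R (bin c al phi) psi -> R al (bin c phi psi).

Definition closure (Rule : rel -> Prop) (N : rel) : rel :=
  fun a b => forall R : rel, (forall x y, N x y -> R x y) -> Rule R -> R a b.

Definition addpair (N : rel) (al phi : F) : rel :=
  fun x y => N x y \/ (x = al /\ y = phi).

Definition closure_at (Rule : rel -> Prop) (N : rel) (al phi : F) : rel :=
  closure Rule (addpair N al phi).

Definition Sop (Rule : rel -> Prop) (P N : rel) : rel :=
  fun a b =>
    ((exists x y, P x y) /\ exists x y, P x y /\ closure_at Rule N x y a b) \/
    (~ (exists x y, P x y) /\ closure Rule N a b).

Definition rules (c d t : F) (i : nat) : rel -> Prop :=
  fun R =>
    match i with
    | 1 => r_top t R /\ r_SI R /\ r_WO R /\ r_AND c R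
    | 2 => r_top t R /\ r_SI R /\ r_WO R /\ r_AND c R /\ r_OR d R
    | 3 => r_top t R /\ r_SI R /\ r_WO R /\ r_AND c R /\ r_CT c R
    | _ => r_top t R /\ r_SI R /\ r_WO R /\ r_AND c R /\ r_OR d R /\ r_CT c R
    end.

Definition PN (N : rel) : rel :=
  fun al phi => forall psi, N al psi -> exists chi, ~ vdash L (pair2 phi psi) chi.

End Defs.

(* Main.v *)
Require Import Defs.

From Stdlib Require Import Classical.

Section H.
Variables (Sg : signature) (L : logic Sg).
Notation F := (Fm Sg).

Lemma cl_incl (Rule : (F -> F -> Prop) -> Prop) (N : F -> F -> Prop) a b :
  N a b -> closure Rule N a b.
Proof. intros H R HN _; auto. Qed.

Lemma cl_at_incl (Rule : (F -> F -> Prop) -> Prop) (N : F -> F -> Prop) x y a b :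
  N a b -> closure_at Rule N x y a b.
Proof. intros H R HN _; apply HN; left; auto. Qed.

Lemma cl_AND (c : F) (N : F -> F -> Prop) : r_AND c (closure (r_AND c) N).
Proof. intros al phi psi H1 H2 R HN HR; apply HR; [apply H1|apply H2]; auto. Qed.
Lemma cl_OR (d : F) (N : F -> F -> Prop) : r_OR d (closure (r_OR d) N).
Proof. intros al be phi H1 H2 R HN HR; apply HR; [apply H1|apply H2]; auto. Qed.
Lemma cl_CT (c : F) (N : F -> F -> Prop) : r_CT c (closure (r_CT c) N).
Proof. intros al phi psi H1 H2 R HN HR; eapply HR; [apply H1|apply H2]; auto. Qed.
Lemma cl_top (t : F) (N : F -> F -> Prop) : r_top t (closure (r_top t) N).
Proof. intros R HN HR; apply HR. Qed.
Lemma cl_SI (N : F -> F -> Prop) : r_SI L (closure (r_SI L) N).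
Proof. intros al be phi H1 H2 R HN HR; exact (HR al be phi (H1 R HN HR) H2). Qed.
Lemma cl_WO (N : F -> F -> Prop) : r_WO L (closure (r_WO L) N).
Proof. intros al phi psi H1 H2 R HN HR; exact (HR al phi psi (H1 R HN HR) H2). Qed.
End H.

Theorem proposition4p13 (Sg : signature) (L : logic Sg)
  (N P : Fm Sg -> Fm Sg -> Prop) :
  selfextensional L ->
  (forall a b, P a b -> PN L N a b) ->
  (* 1 *)
  (forall c, is_conj L c ->
     r_AND_down c N (Sop (r_AND c) P N)) /\
  (* 2 *)
  (forall d, is_disj L d ->
     r_OR_down d N (Sop (r_OR d) P N)) /\
  (* 3 *)
  (forall c, is_conj L c ->
     r_AND c (closure (r_CT c) N) ->
     (forall be ga, P be ga -> r_AND c (closure_at (r_CT c) N be ga)) ->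
     r_CT_down c N (Sop (r_CT c) P N)) /\
  (* 4 *)
  ((forall t, is_top L t -> r_top t (Sop (r_top t) P N)) /\
   r_SI L (Sop (r_SI L) P N) /\
   r_WO L (Sop (r_WO L) P N)) /\
  (* 5 *)
  (forall (i : nat) (c d t : Fm Sg), 1 <= i <= 4 ->
     is_conj L c -> is_top L t -> (i = 2 \/ i = 4 -> is_disj L d) ->
     r_SI L (Sop (rules L c d t i) P N) ->
     r_CT_down c N (Sop (rules L c d t i) P N) ->
     r_AND_down c N (Sop (rules L c d t i) P N)).
Proof.
  intros _ _.
  split; [|split; [|split; [|split]]].
  - intros c Hc al phi psi HN H.
    destruct H as [[Hex [x [y [Hp H]]]] | [Hne H]].
    + left; split; auto; exists x, y; split; auto.
      apply cl_AND; auto; apply cl_at_incl; auto.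
    + right; split; auto. apply cl_AND; auto; apply cl_incl; auto.
  - intros d Hd al be phi HN H.
    destruct H as [[Hex [x [y [Hp H]]]] | [Hne H]].
    + left; split; auto; exists x, y; split; auto.
      apply cl_OR; auto; apply cl_at_incl; auto.
    + right; split; auto. apply cl_OR; auto; apply cl_incl; auto.
  - intros c Hc HA HA' al phi psi HN H.
    destruct H as [[Hex [x [y [Hp H]]]] | [Hne H]].
    + left; split; auto; exists x, y; split; auto.
      apply (HA' x y Hp).
      * apply cl_at_incl; auto.
      * eapply cl_CT; [apply cl_at_incl; eauto | exact H].
    + right; split; auto. apply HA.
      * apply cl_incl; auto.
      * eapply cl_CT; [apply cl_incl; eauto | exact H].
  - split; [|split].
    + intros t Ht. unfold r_top.
      destruct (classic (exists x y, P x y)) as [Hex|Hne].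
      * left; split; auto. destruct Hex as [x [y Hp]]. exists x, y; split; auto.
        apply cl_top.
      * right; split; auto. apply cl_top.
    + intros al be phi H Hv.
      destruct H as [[Hex [x [y [Hp H]]]] | [Hne H]].
      * left; split; auto; exists x, y; split; auto. eapply cl_SI; eauto.
      * right; split; auto. eapply cl_SI; eauto.
    + intros al phi psi H Hv.
      destruct H as [[Hex [x [y [Hp H]]]] | [Hne H]].
      * left; split; auto; exists x, y; split; auto. eapply cl_WO; eauto.
      * right; split; auto. eapply cl_WO; eauto.
  - intros i c d t _ Hc _ _ HSI HCT al phi psi HN H.
    apply HCT; auto.
    eapply HSI; [exact H|].
    apply (proj2 (Hc al phi al)). apply vdash_refl. left; reflexivity.
Qed.
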